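(* Let $(S,\cdot)$ be a discrete semigroup, let $\mathcal{F}$ be a filter on $S$ such that $\overline{\mathcal{F}}$ is a subsemigroup of $\beta S$, let $(X,\langle T_s\rangle_{s\in S})$ be a dynamical system, and let $x,y\in X$. If $x$ and $y$ are $\mathcal{F}$-proximal, then there is a minimal left ideal $L$ of $\overline{\mathcal{F}}$ such that $T_u(x)=T_u(y)$ for all $u\in L$.
   Context: $\beta S$ is the Stone–Čech compactification of $S$ (ultrafilters on $S$) with the extended operation making it a compact right topological semigroup; $\overline{\mathcal{F}}=\bigcap_{F\in\mathcal{F}}\overline{F}$ is the set of ultrafilters containing $\mathcal{F}$. A dynamical system $(X,\langle T_s\rangle_{s\in S})$: $X$ compact Hausdorff, each $T_s$ continuous, $T_s\circ T_t=T_{st}$. For $p\in\beta S$, $T_p(x)=p\text{-}\lim_{s\in S}T_s(x)$, and $T_p\circ T_q=T_{pq}$. Points $x,y$ are $\mathcal{F}$-proximal if for every neighbourhood $U$ of the diagonal in $X\times X$ and every $F\in\mathcal{F}$ there is $s\in F$ with $(T_s(x),T_s(y))\in U$. *)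

(* Defs.v *)
From HB Require Import structures.
From mathcomp Require Import all_boot all_order all_algebra.
From mathcomp Require Import boolp classical_sets functions filter topology.
Set Implicit Arguments. Unset Strict Implicit. Unset Printing Implicit Defensive.
Local Open Scope classical_set_scope.

Section BetaS.
Variables (S : Type) (op : S -> S -> S).

Definition betaS : set (set_system S) := [set p | UltraFilter p].

(* Extended operation on beta S (Hindman--Strauss convention):
   A \in p q  iff  {s | s^{-1} A \in q} \in p,  s^{-1}A = {t | s t \in A}. *)
Definition bmul (p q : set_system S) : set_system S :=
  [set A | p [set s | q [set t | A (op s t)]]].

(* closure of a filter F in beta S: the ultrafilters containing F *)
Definition Fbar (F : set_system S) : set (set_system S) :=
  [set p | UltraFilter p /\ F `<=` p].

Definition subsemigroup (A : set (set_system S)) :=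
  forall p q, A p -> A q -> A (bmul p q).

Definition left_ideal (A L : set (set_system S)) :=
  L !=set0 /\ L `<=` A /\ (forall p q, A p -> L q -> L (bmul p q)).

Definition minimal_left_ideal (A L : set (set_system S)) :=
  left_ideal A L /\ (forall L', left_ideal A L' -> L' `<=` L -> L' = L).
End BetaS.

Section Dyn.
Variables (S : Type) (op : S -> S -> S) (X : topologicalType) (T : S -> X -> X).

(* T_p(x) = p-lim_{s} T_s(x): the (unique, as X is compact Hausdorff)
   limit of the image filter; x serves only as a default value. *)
Definition Tp (p : set_system S) (x : X) : X :=
  xget x [set z | (fun s => T s x) @ p --> z].

Definition diag_nbhd (U : set (X * X)) :=
  exists V : set (X * X), open V /\ (forall z, V (z, z)) /\ V `<=` U.

Definition F_proximal (F : set_system S) (x y : X) :=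
  forall U, diag_nbhd U -> forall A, F A -> exists2 s, A s & U (T s x, T s y).
End Dyn.

(* Main.v *)
Require Import Defs.
From HB Require Import structures.
From mathcomp Require Import all_boot all_order all_algebra.
From mathcomp Require Import boolp classical_sets functions filter topology.
Local Open Scope classical_set_scope.
Section Alg.
Variables (S : Type) (op : S -> S -> S) (op_assoc : associative op)
  (F : set_system S) (F_filter : ProperFilter F)
  (F_semi : subsemigroup op (Fbar F)).

Lemma ultra_compl (q : set_system S) (A : set S) :
  UltraFilter q -> ~ q A -> q (~` A).
Proof. by move=> uq nA; case: (in_ultra_setVsetC A uq). Qed.

Lemma bmulA r s q : bmul op r (bmul op s q) = bmul op (bmul op r s) q.
Proof.
rewrite /bmul; apply: funext => A /=; congr (r _); apply: funext => u /=.
congr (s _); apply: funext => w /=; congr (q _); apply: funext => v /=.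
by rewrite op_assoc.
Qed.

Definition Lid q := [set t | exists2 r, Fbar F r & t = bmul op r q].

Lemma Lid_closed q p : Fbar F q -> UltraFilter p ->
  (forall A, (forall r, Fbar F r -> bmul op r q A) -> p A) -> Lid q p.
Proof.
move=> [uq Fq] up hp.
pose G := [set C | exists A, exists B, [/\ p A, F B &
   [set s | q [set t | A (op s t)]] `&` B `<=` C]].
have GF : ProperFilter G.
  apply: Build_ProperFilter.
    move=> [A [B [pA FB sub]]].
    have : p (~` A).
      apply: hp => r [ur Fr]; rewrite /bmul.
      apply: (filterS _ (Fr _ FB)) => s Bs.
      apply: ultra_compl => qA; exact: (sub s).
    move=> pnA; have : p (A `&` ~` A) by exact: filterI.
    by rewrite setICr; apply: filter_not_empty.
  split.
  - exists setT, setT; split => //; [exact: filterT|exact: filterT].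
  - move=> C1 C2 [A1 [B1 [pA1 FB1 s1]]] [A2 [B2 [pA2 FB2 s2]]].
    exists (A1 `&` A2), (B1 `&` B2); split; [exact: filterI|exact: filterI|].
    move=> s [qs [b1 b2]]; split.
    + apply: s1; split => //; apply: filterS qs => t [] //.
    + apply: s2; split => //; apply: filterS qs => t [] //.
  - move=> P Q PQ [A [B [pA FB sub]]]; exists A, B; split => //.
    exact: subset_trans PQ.
have [r [ur Gr]] := ultraFilterLemma GF.
have Fr : F `<=` r.
  move=> B FB; apply: Gr; exists setT, B; split => //; first exact: filterT.
have Fbr : Fbar F r by split.
exists r; first exact: Fbr.
have [ub _] := F_semi _ _ Fbr (conj uq Fq).
apply/esym/(@max_filter _ p up (bmul op r q) (@ultra_proper _ _ ub)).
move=> A pA; apply: Gr; exists A, setT; split => //; first exact: filterT.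
Qed.

Lemma Lid_sub q q' : Fbar F q -> Lid q q' -> Lid q' `<=` Lid q.
Proof.
move=> Fq [r' Fr' ->] _ [r Fr ->]; exists (bmul op r r'); first exact: F_semi.
exact: bmulA.
Qed.

Lemma Lid_self q : Fbar F q -> Lid q (bmul op q q).
Proof. by move=> Fq; exists q. Qed.

Lemma Lid_Fbar q : Fbar F q -> Lid q `<=` Fbar F.
Proof. by move=> Fq _ [r Fr ->]; exact: F_semi. Qed.


Lemma bmul_ultra r q : Fbar F r -> Fbar F q -> UltraFilter (bmul op r q).
Proof. by move=> Fr Fq; have [] := F_semi _ _ Fr Fq. Qed.

Lemma chain_lb (A : set (set_system S)) : A !=set0 -> A `<=` Fbar F ->
  (forall q1 q2, A q1 -> A q2 -> Lid q1 `<=` Lid q2 \/ Lid q2 `<=` Lid q1) ->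
  exists2 qs, Fbar F qs & forall q, A q -> Lid qs `<=` Lid q.
Proof.
move=> [q0 Aq0] AF tot.
pose G := [set C | exists2 q, A q & forall r, Fbar F r -> bmul op r q C].
have GF : ProperFilter G.
  apply: Build_ProperFilter.
    move=> [q Aq /(_ q (AF _ Aq))].
    have := bmul_ultra _ _ (AF _ Aq) (AF _ Aq) => ub.
    by apply: filter_not_empty.
  split.
  - exists q0 => // r Fr; have := bmul_ultra _ _ Fr (AF _ Aq0) => ub.
    exact: filterT.
  - move=> C1 C2 [q1 Aq1 h1] [q2 Aq2 h2].
    have [s12|s21] := tot _ _ Aq1 Aq2.
    + exists q1 => // r Fr; have := bmul_ultra _ _ Fr (AF _ Aq1) => ub.
      apply: filterI; first exact: h1.
      have [r' Fr' ->] := s12 _ (ex_intro2 _ _ r Fr erefl).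
      exact: h2.
    + exists q2 => // r Fr; have := bmul_ultra _ _ Fr (AF _ Aq2) => ub.
      apply: filterI; last exact: h2.
      have [r' Fr' ->] := s21 _ (ex_intro2 _ _ r Fr erefl).
      exact: h1.
  - move=> P Q PQ [q Aq h]; exists q => // r Fr.
    have := bmul_ultra _ _ Fr (AF _ Aq) => ub.
    exact: filterS PQ (h r Fr).
have [qs [us Gqs]] := ultraFilterLemma GF.
have Lq q : A q -> Lid q qs.
  move=> Aq; apply: Lid_closed => //; first exact: AF.
  by move=> C hC; apply: Gqs; exists q.
have Fqs : Fbar F qs.
  by have [r Fr ->] := Lq _ Aq0; apply: F_semi => //; exact: AF.
exists qs => // q Aq; apply: Lid_sub; [exact: AF|exact: Lq].
Qed.

End Alg.
Lemma fmap_ultra {A B : Type} (f : A -> B) (p : set_system A) :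
  UltraFilter p -> UltraFilter (f @ p).
Proof.
move=> up; split; first exact: fmap_proper_filter.
move=> G PG sub; apply/seteqP; split => C GC; last exact: sub.
apply: contrapT => npC.
have : p (~` (f @^-1` C)) by case: (in_ultra_setVsetC (f @^-1` C) up).
move=> /(sub (~` C)) GnC.
have : G (C `&` ~` C) by exact: filterI.
by rewrite setICr; apply: filter_not_empty.
Qed.

Section Dyn.
Variables (S : Type) (op : S -> S -> S)
  (F : set_system S) (F_filter : ProperFilter F)
  (F_semi : subsemigroup op (Fbar F))
  (X : topologicalType) (X_compact : compact [set: X])
  (X_hausdorff : hausdorff_space X)
  (T : S -> X -> X) (T_cont : forall s, continuous (T s))
  (T_act : forall s t, T s \o T t = T (op s t)).

Lemma Tp_cvg p z : UltraFilter p -> (fun s => T s z) @ p --> Tp T p z.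
Proof.
move=> up; have := X_compact; rewrite compact_ultra.
move=> /(_ _ (fmap_ultra (fun s => T s z) p up)) [].
  exact: filterT.
by move=> c [_ hc]; rewrite /Tp; exact: (xgetI z hc).
Qed.

Lemma Tp_eq p z v : ProperFilter p -> (fun s => T s z) @ p --> v -> Tp T p z = v.
Proof.
move=> pp hv; apply: (cvg_unique X_hausdorff (F := (fun s => T s z) @ p)) => //.
by rewrite /Tp; exact: (xgetI z hv).
Qed.

Lemma Tp_mul r q z : UltraFilter r -> UltraFilter q -> ProperFilter (bmul op r q) ->
  Tp T (bmul op r q) z = Tp T r (Tp T q z).
Proof.
move=> ur uq pb; apply: Tp_eq => U /=.
rewrite nbhsE => -[O [oO Ov] OU].
have cr := Tp_cvg r (Tp T q z) ur.
have cq := Tp_cvg q z uq.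
have : r [set s | O (T s (Tp T q z))] by apply: cr; exact: open_nbhs_nbhs.
apply: filterS => s Os.
have nO : nbhs (T s (Tp T q z)) O by exact: open_nbhs_nbhs.
have := cq _ (T_cont s (Tp T q z) _ nO).
move=> h0; have h1 : q [set t | O (T s (T t z))] := h0.
apply: filterS h1 => t /= h; apply: OU.
by have := congr1 (fun f => f z) (T_act s t) => /= <-.
Qed.


Lemma prox_point x y : F_proximal T F x y ->
  exists p0, Fbar F p0 /\ Tp T p0 x = Tp T p0 y.
Proof.
move=> prox.
pose G := [set C | exists A, exists U, [/\ F A, diag_nbhd U &
   [set s | A s /\ U (T s x, T s y)] `<=` C]].
have dT : diag_nbhd [set: X * X] by exists setT; split => //; exact: openT.
have GF : ProperFilter G.
  apply: Build_ProperFilter.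
    move=> [A [U [FA dU sub]]].
    have [s As Us] := prox U dU A FA.
    exact: (sub s).
  split.
  - exists setT, setT; split => //; exact: filterT.
  - move=> C1 C2 [A1 [U1 [FA1 dU1 s1]]] [A2 [U2 [FA2 dU2 s2]]].
    exists (A1 `&` A2), (U1 `&` U2); split; first exact: filterI.
      move: dU1 dU2 => [V1 [oV1 [dV1 sV1]]] [V2 [oV2 [dV2 sV2]]].
      exists (V1 `&` V2); split; first exact: openI.
      split; first by move=> z; split.
      by move=> w [h1 h2]; split; [apply: sV1|apply: sV2].
    move=> s [[a1 a2] [u1 u2]]; split; [apply: s1|apply: s2]; by split.
  - move=> P Q PQ [A [U [FA dU sub]]]; exists A, U; split => //.
    exact: subset_trans PQ.
have [p0 [up0 Gp0]] := ultraFilterLemma GF.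
have Fp0 : F `<=` p0.
  move=> B FB; apply: Gp0; exists B, setT; split => //.
  by move=> s [].
exists p0; split; first by split.
apply: contrapT => neq.
have := X_hausdorff; rewrite open_hausdorff => /(_ (Tp T p0 x) (Tp T p0 y)).
case; first by apply/eqP.
move=> [Oa Ob] /= [aOa bOb] [oOa oOb /eqP Oab0].
have reg (a : X) (O : set X) : open O -> O a -> exists2 B, nbhs a B & closure B `<=` O.
  move=> oO Oa'.
  have nT : nbhs a [set: X] by exact: filterT.
  have := @compact_regular X a setT X_hausdorff X_compact nT.
  by move=> /(_ O (open_nbhs_nbhs (conj oO Oa'))) [B nB sB]; exists B.
have [Ba nBa sBa] := reg _ _ oOa (set_mem aOa).
have [Bb nBb sBb] := reg _ _ oOb (set_mem bOb).
pose V := [set w : X * X | ~ closure Ba w.1 \/ ~ closure Bb w.2].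
have oV : open V.
  rewrite openE => w [h|h]; rewrite /interior /nbhs /=.
  - exists (~` closure Ba, setT); first split => /=.
    + apply: open_nbhs_nbhs; split => //; exact/closed_openC/closed_closure.
    + exact: filterT.
    + by move=> [u v] [/= hu _]; left.
  - exists (setT, ~` closure Bb); first split => /=.
    + exact: filterT.
    + apply: open_nbhs_nbhs; split => //; exact/closed_openC/closed_closure.
    + by move=> [u v] [/= _ hv]; right.
have dV : diag_nbhd V.
  exists V; split => //; split => // z.
  have [cz|] := pselect (closure Ba z); last by left.
  right => cbz.
  have : (Oa `&` Ob) z by split; [apply: sBa|apply: sBb].
  by rewrite Oab0.
have GV : p0 [set s | V (T s x, T s y)].
  apply: Gp0; exists setT, V; split => //; first exact: filterT.
  by move=> s [].
have hx : p0 [set s | Ba (T s x)] by exact: (Tp_cvg p0 x up0).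
have hy : p0 [set s | Bb (T s y)] by exact: (Tp_cvg p0 y up0).
have : p0 ([set s | V (T s x, T s y)] `&`
   ([set s | Ba (T s x)] `&` [set s | Bb (T s y)])).
  by apply: filterI => //; exact: filterI.
move=> /filter_ex [s [[h|h] [bx by']]].
- by apply: h; exact: subset_closure.
- by apply: h; exact: subset_closure.
Qed.

End Dyn.

Theorem lemma13 (S : Type) (op : S -> S -> S) (op_assoc : associative op)
  (F : set_system S) (F_filter : ProperFilter F)
  (F_semi : subsemigroup op (Fbar F))
  (X : topologicalType) (X_compact : compact [set: X])
  (X_hausdorff : hausdorff_space X)
  (T : S -> X -> X) (T_cont : forall s, continuous (T s))
  (T_act : forall s t, T s \o T t = T (op s t))
  (x y : X) :
  F_proximal T F x y ->
  exists L, minimal_left_ideal op (Fbar F) L /\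
    (forall u, L u -> Tp T u x = Tp T u y).
Proof.
move=> prox.
have [p0 [Fp0 hp0]] := @prox_point _ _ F_filter _ X_compact X_hausdorff _ _ _ prox.
pose L := Lid S op F.
pose P q := Fbar F q /\ L q `<=` L p0.
pose Tt := {q : set_system S | P q}.
pose R (a b : Tt) := `[< L (sval b) `<=` L (sval a) >].
have t0 : Tt by exists p0; split.
have [t tmax] : exists t, premaximal R t.
  apply: (ZL_preorder t0).
  - by move=> a; apply/asboolP.
  - move=> a b c /asboolP h1 /asboolP h2; apply/asboolP.
    exact: subset_trans h2 h1.
  - move=> A Atot; case: (pselect (A !=set0)); last first.
      by move=> nA; exists t0 => b Ab; exfalso; apply: nA; exists b.
    move=> [a Aa].
    have [qs Fqs hqs] : exists2 qs, Fbar F qs &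
        forall q, [set sval b | b in A] q -> L qs `<=` L q.
      apply: (@chain_lb _ _ op_assoc _ F_filter F_semi).
    + by exists (sval a), a.
    + by move=> _ [b _ <-]; case: (svalP b).
    + move=> _ _ [b1 Ab1 <-] [b2 Ab2 <-].
      by case: (Atot _ _ Ab1 Ab2) => /asboolP h; [right|left].
    have Pqs : P qs.
      split => //; apply: subset_trans (hqs (sval a) _) _.
        by exists a.
      by case: (svalP a).
    exists (exist _ qs Pqs) => b Ab; apply/asboolP => /=.
    by apply: hqs; exists b.
case: t tmax => q Pq tmax; have [Fq Lq0] := Pq.
exists (L q); split.
  have li : left_ideal op (Fbar F) (L q).
    split; first by exists (bmul op q q); exact: Lid_self.
    split; first exact: Lid_Fbar.
    move=> p u Fp [r Fr ->]; exists (bmul op p r); first exact: F_semi.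
    exact: bmulA.
  split => // L' [[u L'u] [L'F L'cl]] sub.
  have Fu := L'F u L'u.
  have sL : L u `<=` L' by move=> _ [r Fr ->]; exact: L'cl.
  have Pu : P u by split => //; apply: subset_trans Lq0; exact: subset_trans sub.
  have /asboolP h := tmax (exist _ u Pu) (asboolT (subset_trans sL sub)).
  by apply/seteqP; split => //; exact: subset_trans h sL.
move=> _ /Lq0 [r Fr ->].
have [ur _] := Fr; have [u0 _] := Fp0.
have [ub _] := F_semi _ _ Fr Fp0.
have pb := @ultra_proper _ _ ub.
rewrite (@Tp_mul _ _ _ X_compact X_hausdorff _ T_cont T_act r p0 x ur u0 pb).
rewrite (@Tp_mul _ _ _ X_compact X_hausdorff _ T_cont T_act r p0 y ur u0 pb).
by rewrite hp0.
Qed.
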